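(* Let $\phi : G\to H$ be an epic quiver homomorphism. Then $\phi$ is epi-coessential if and only if the following conditions hold: (1) the edge map $E(\phi)$ is bijective; (2) if $v\in\mathrm{indep}(G)$, then $V(\phi)(v)\in\mathrm{indep}(H)$; (3) if $w\in\mathrm{indep}(H)$, there is a unique $v\in\mathrm{indep}(G)$ such that $V(\phi)(v)=w$.
   Context: A quiver is a quadruple $(V,E,\sigma,\tau)$ with $V,E$ sets and $\sigma,\tau : E \to V$ functions (source and target). A quiver homomorphism $\phi$ is a pair $(V(\phi),E(\phi))$ of functions on vertices and edges commuting with sources and targets; composition is componentwise. A homomorphism is epic (an epimorphism in the category of quivers) iff both $V(\phi)$ and $E(\phi)$ are surjective. An epic $\phi: G\to H$ is epi-coessential if for every quiver $A$ and homomorphism $\alpha : A\to G$, $\phi\circ\alpha$ epic implies $\alpha$ epic. A vertex $v$ of a quiver $G$ is independent if $\sigma_G^{-1}(v)=\tau_G^{-1}(v)=\emptyset$, and $\mathrm{indep}(G)$ is the set of independent vertices of $G$. *)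

(* Defs.v *)
Record quiver : Type := Quiver {
  qV : Type;
  qE : Type;
  src : qE -> qV;
  tgt : qE -> qV
}.

Record qhom (G H : quiver) : Type := QHom {
  Vmap : qV G -> qV H;
  Emap : qE G -> qE H;
  Vmap_src : forall e, Vmap (src G e) = src H (Emap e);
  Vmap_tgt : forall e, Vmap (tgt G e) = tgt H (Emap e)
}.
Arguments Vmap {G H}.
Arguments Emap {G H}.

Definition qcomp {A G H : quiver} (psi : qhom G H) (phi : qhom A G) : qhom A H.
Proof.
  refine (QHom A H (fun v => Vmap psi (Vmap phi v)) (fun e => Emap psi (Emap phi e)) _ _).
  - intro e. rewrite (Vmap_src _ _ phi), (Vmap_src _ _ psi). reflexivity.
  - intro e. rewrite (Vmap_tgt _ _ phi), (Vmap_tgt _ _ psi). reflexivity.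
Defined.

Definition surjective {X Y : Type} (f : X -> Y) : Prop := forall y, exists x, f x = y.
Definition injective {X Y : Type} (f : X -> Y) : Prop := forall x1 x2, f x1 = f x2 -> x1 = x2.
Definition bijective {X Y : Type} (f : X -> Y) : Prop := injective f /\ surjective f.

Definition epic {G H : quiver} (phi : qhom G H) : Prop :=
  surjective (Vmap phi) /\ surjective (Emap phi).

Definition epi_coessential {G H : quiver} (phi : qhom G H) : Prop :=
  epic phi /\
  forall (A : quiver) (alpha : qhom A G), epic (qcomp phi alpha) -> epic alpha.

Definition indep (G : quiver) (v : qV G) : Prop :=
  (forall e, src G e <> v) /\ (forall e, tgt G e <> v).

(* Main.v *)
Require Import Defs.
From Stdlib Require Import Classical ClassicalEpsilon.

Section S.
Variables (G H : quiver) (phi : qhom G H).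

Definition remq (v : qV G) (Hv : indep G v) : quiver :=
  Quiver {x : qV G | x <> v} (qE G)
    (fun e => exist _ (src G e) (proj1 Hv e))
    (fun e => exist _ (tgt G e) (proj2 Hv e)).

Definition remh (v : qV G) (Hv : indep G v) : qhom (remq v Hv) G :=
  QHom (remq v Hv) G (fun x => proj1_sig x) (fun e => e)
    (fun e => eq_refl) (fun e => eq_refl).

Lemma rem_not_epic v Hv : ~ epic (remh v Hv).
Proof. intros [Hs _]. destruct (Hs v) as [[x Hx] E]. simpl in E. auto. Qed.

Lemma rem_epic_comp v Hv : surjective (Emap phi) ->
  (forall y, exists x, x <> v /\ Vmap phi x = y) -> epic (qcomp phi (remh v Hv)).
Proof.
  intros HE HV. split.
  - intro y. destruct (HV y) as [x [Hx E]]. exists (exist _ x Hx). exact E.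
  - intro y. destruct (HE y) as [e E]. exists e. exact E.
Qed.
End S.

Theorem mainTheorem7 (G H : quiver) (phi : qhom G H) (Hepi : epic phi) :
  epi_coessential phi <->
  (bijective (Emap phi) /\
   (forall v : qV G, indep G v -> indep H (Vmap phi v)) /\
   (forall w : qV H, indep H w ->
      exists v : qV G, (indep G v /\ Vmap phi v = w) /\
        forall v' : qV G, indep G v' /\ Vmap phi v' = w -> v' = v)).
Proof.
  destruct Hepi as [HV HE].
  assert (Hpre : forall x, indep H (Vmap phi x) -> indep G x).
  { intros x [H1 H2]; split; intros e E.
    - apply (H1 (Emap phi e)). rewrite <- Vmap_src, E. reflexivity.
    - apply (H2 (Emap phi e)). rewrite <- Vmap_tgt, E. reflexivity. }
  split.
  - intros [_ Hco]. split; [|split].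
    + split; [|exact HE].
      assert (sec : forall y, {x | Emap phi x = y}).
      { intro y. apply constructive_indefinite_description. apply HE. }
      set (s := fun y => proj1_sig (sec y)).
      assert (Hs : forall y, Emap phi (s y) = y) by (intro; apply (proj2_sig (sec y))).
      set (A := Quiver (qV G) (qE H) (fun y => src G (s y)) (fun y => tgt G (s y))).
      set (al := QHom A G (fun x => x) s (fun _ => eq_refl) (fun _ => eq_refl)).
      assert (Hal : epic al).
      { apply Hco. split.
        - intro y. destruct (HV y) as [x E]. exists x. exact E.
        - intro y. exists y. simpl. apply Hs. }
      intros x1 x2 E. destruct (proj2 Hal x1) as [y1 E1]. destruct (proj2 Hal x2) as [y2 E2].
      simpl in E1, E2. subst. rewrite !Hs in E. subst. reflexivity.
    + intros v Hv. apply NNPP. intro Hn.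
      apply (rem_not_epic G v Hv). apply Hco. apply rem_epic_comp; [exact HE|].
      intro y. destruct (HV y) as [x E].
      destruct (classic (x = v)) as [->|Hx]; [|exists x; auto].
      destruct (not_and_or _ _ Hn) as [Hn'|Hn'];
        apply not_all_ex_not in Hn'; destruct Hn' as [f Hf]; apply NNPP in Hf;
        destruct (HE f) as [e Ee]; subst f.
      * exists (src G e). split; [apply (proj1 Hv)|]. rewrite Vmap_src. congruence.
      * exists (tgt G e). split; [apply (proj2 Hv)|]. rewrite Vmap_tgt. congruence.
    + intros w Hw. destruct (HV w) as [v Ev]. subst w.
      exists v. split; [split; auto|].
      intros v' [Hv' E']. apply NNPP. intro Hne.
      apply (rem_not_epic G v' Hv'). apply Hco. apply rem_epic_comp; [exact HE|].
      intro y. destruct (HV y) as [x E].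
      destruct (classic (x = v')) as [->|Hx]; [|exists x; auto].
      exists v. split; [auto|congruence].
  - intros [[Hinj _] [H2 H3]]. split; [split; assumption|].
    intros A al [HcV HcE]. split.
    + intro x. destruct (classic (indep G x)) as [Hx|Hx].
      * destruct (H3 _ (H2 x Hx)) as [v [_ Hu]].
        destruct (HcV (Vmap phi x)) as [a Ea]. simpl in Ea.
        exists a. rewrite (Hu x) by auto. apply Hu. split; [|exact Ea].
        apply Hpre. rewrite Ea. apply H2, Hx.
      * destruct (not_and_or _ _ Hx) as [Hn'|Hn'];
          apply not_all_ex_not in Hn'; destruct Hn' as [e He]; apply NNPP in He;
          destruct (HcE (Emap phi e)) as [a Ea]; apply Hinj in Ea; simpl in Ea.
        -- exists (src A a). rewrite Vmap_src, Ea. exact He.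
        -- exists (tgt A a). rewrite Vmap_tgt, Ea. exact He.
    + intro e. destruct (HcE (Emap phi e)) as [a Ea]. exists a. apply Hinj, Ea.
Qed.
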